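(* Consider the averaged buck-boost converter $-L\dot I=(1-u)V-uV_s$, $C\dot V=(1-u)I-GV$ with scalar constants $L>0$, $C>0$, $G\ge0$, $V_s\in\mathbb{R}$, extended by $\dot u=\upsilon$. Then this system is passive with respect to the storage function $S=\tfrac12L\dot I^2+\tfrac12C\dot V^2$ and the port-variables $\dot u$ and $y=\dot IV-\dot VI+V_s\dot I$, i.e. $\dot S\le\dot u\,y$.
   Context: $I$ is the inductor current, $V$ the capacitor voltage, $u\in[0,1]$ the duty cycle (averaged model). *)

(* Defs.v *)
From Stdlib Require Import Reals.
From Coquelicot Require Import Coquelicot.
Open Scope R_scope.

Definition storage (L C : R) (dI dV : R -> R) (t : R) : R :=
  / 2 * L * (dI t) ^ 2 + / 2 * C * (dV t) ^ 2.

Definition port_output (Vs : R) (I V dI dV : R -> R) (t : R) : R :=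
  dI t * V t - dV t * I t + Vs * dI t.

(* Main.v *)
Require Import Defs.
From Stdlib Require Import Reals Lra.
From Coquelicot Require Import Coquelicot.
Open Scope R_scope.

Lemma Deq (f : R -> R) (df : R -> R) t (H : is_derive f t (df t)) : Derive (fun x => f x) t = df t.
Proof. exact (is_derive_unique _ _ _ H). Qed.

Theorem lemma5 (L C G Vs : R) (I V u dI dV du : R -> R)
  (hL : 0 < L) (hC : 0 < C) (hG : 0 <= G)
  (hI : forall t, is_derive I t (dI t))
  (hV : forall t, is_derive V t (dV t))
  (hu : forall t, is_derive u t (du t))
  (eqI : forall t, - L * dI t = (1 - u t) * V t - u t * Vs)
  (eqV : forall t, C * dV t = (1 - u t) * I t - G * V t) :
  forall t, ex_derive (storage L C dI dV) t /\
    Derive (storage L C dI dV) t <= du t * port_output Vs I V dI dV t.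
Proof.
  assert (EI : forall t, dI t = - ((1 - u t) * V t - u t * Vs) / L).
  { intro t. rewrite <- eqI. field. lra. }
  assert (EV : forall t, dV t = ((1 - u t) * I t - G * V t) / C).
  { intro t. rewrite <- eqV. field. lra. }
  assert (DI : forall t, is_derive dI t ((du t * V t - (1 - u t) * dV t + du t * Vs) / L)).
  { intro t. apply (is_derive_ext (fun t => - ((1 - u t) * V t - u t * Vs) / L)).
    { intro s. now rewrite EI. }
    pose proof (hu t) as Hu. pose proof (hV t) as HV.
    auto_derive.
    - repeat split; eexists; eauto.
    - rewrite (Deq u du t Hu), (Deq V dV t HV). field. lra. }
  assert (DV : forall t, is_derive dV t ((- du t * I t + (1 - u t) * dI t - G * dV t) / C)).
  { intro t. apply (is_derive_ext (fun t => ((1 - u t) * I t - G * V t) / C)).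
    { intro s. now rewrite EV. }
    pose proof (hu t) as Hu. pose proof (hV t) as HV. pose proof (hI t) as HI.
    auto_derive.
    - repeat split; eexists; eauto.
    - rewrite (Deq u du t Hu), (Deq V dV t HV), (Deq I dI t HI). field. lra. }
  intro t.
  assert (HS : is_derive (storage L C dI dV) t
     (L * dI t * ((du t * V t - (1 - u t) * dV t + du t * Vs) / L)
      + C * dV t * ((- du t * I t + (1 - u t) * dI t - G * dV t) / C))).
  { unfold storage. pose proof (DI t) as A. pose proof (DV t) as B.
    auto_derive.
    - repeat split; eexists; eauto.
    - rewrite (Deq dI (fun t => (du t * V t - (1 - u t) * dV t + du t * Vs) / L) t A), (Deq dV (fun t => (- du t * I t + (1 - u t) * dI t - G * dV t) / C) t B). field. lra. }
  split.
  - eexists; eauto.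
  - rewrite (is_derive_unique _ _ _ HS). unfold port_output.
    replace (L * dI t * ((du t * V t - (1 - u t) * dV t + du t * Vs) / L) +
      C * dV t * ((- du t * I t + (1 - u t) * dI t - G * dV t) / C))
      with (du t * (dI t * V t - dV t * I t + Vs * dI t) - G * (dV t * dV t)) by (field; lra).
    assert (0 <= G * (dV t * dV t)) by (apply Rmult_le_pos; [lra| apply Rle_0_sqr]).
    lra.
Qed.
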